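(* Let $X$ be a digraph of order $n$ whose $H$-spectrum is $\{-(n-1), 1^{(n-1)}\}$ (i.e., $-(n-1)$ once and $1$ with multiplicity $n-1$). Then $X$ is isomorphic to one of $K_1$, $K_2$, $T_2$, $K_3'$, $K_4'$.
   Context: A digraph has a finite vertex set and an arc set of ordered pairs of distinct vertices; $\{x,y\}$ is a digon if both $xy,yx$ are arcs. The Hermitian adjacency matrix $H(X)$ has $(u,v)$-entry $1$ if $uv$ and $vu$ are arcs, $i$ if only $uv$ is an arc, $-i$ if only $vu$ is an arc, and $0$ otherwise; the $H$-spectrum is the multiset of eigenvalues of $H(X)$. $K_1$ is a single vertex; $K_2$ is a single digon on two vertices; $T_2$ is a single arc on two vertices. $K_3'$ has vertices $a,b,c$, a digon $\{a,b\}$ and arcs $ac$, $cb$. $K_4'$ has vertices $x_1,x_2,x_3,x_4$, arcs $x_1x_2,x_2x_3,x_3x_4,x_4x_1$, and digons $\{x_1,x_3\}$ and $\{x_2,x_4\}$. *)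

(* Defs.v *)
From HB Require Import structures.
From mathcomp Require Import all_boot all_order all_algebra algC.
Set Implicit Arguments. Unset Strict Implicit. Unset Printing Implicit Defensive.
Import Order.TTheory GRing.Theory Num.Theory.
Local Open Scope ring_scope.

(* A digraph of order n: vertex set 'I_n, arc relation D (uv is an arc iff D u v).
   Arcs join distinct vertices: D must be irreflexive (imposed as a hypothesis). *)
Definition digraph_loopless (n : nat) (D : rel 'I_n) : Prop := forall u, ~~ D u u.

Definition hermAdj (n : nat) (D : rel 'I_n) : 'M[algC]_n :=
  \matrix_(u, v)
    (if D u v && D v u then 1
     else if D u v then 'i
     else if D v u then - 'i
     else 0).

(* H-spectrum of X is the multiset of eigenvalues of H(X), i.e. the roots (with
   multiplicity) of its characteristic polynomial.  The H-spectrum of an order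
   n.+1 digraph equals {-(n), 1^(n)} iff char_poly H = (X + n) (X - 1)^n. *)
Definition H_spectrum_is_main (n : nat) (D : rel 'I_n.+1) : Prop :=
  char_poly (hermAdj D) = ('X + (n%:R)%:P) * ('X - 1) ^+ n.

Definition digraph_iso (n m : nat) (D : rel 'I_n) (E : rel 'I_m) : Prop :=
  exists f : 'I_n -> 'I_m, bijective f /\ forall u v, D u v = E (f u) (f v).

Definition arcs_of (n : nat) (s : seq (nat * nat)) : rel 'I_n :=
  fun u v => ((u : nat), (v : nat)) \in s.

Definition K1 : rel 'I_1 := arcs_of [::].
Definition K2 : rel 'I_2 := arcs_of [:: (0%N,1%N); (1%N,0%N)].
Definition T2 : rel 'I_2 := arcs_of [:: (0%N,1%N)].
(* K_3' : a=0, b=1, c=2; digon {a,b}, arcs ac, cb *)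
Definition K3' : rel 'I_3 := arcs_of [:: (0%N,1%N); (1%N,0%N); (0%N,2%N); (2%N,1%N)].
(* K_4' : x1..x4 = 0..3; arcs x1x2,x2x3,x3x4,x4x1; digons {x1,x3},{x2,x4} *)
Definition K4' : rel 'I_4 :=
  arcs_of [:: (0%N,1%N); (1%N,2%N); (2%N,3%N); (3%N,0%N); (0%N,2%N); (2%N,0%N); (1%N,3%N); (3%N,1%N)].

(* Main.v *)
Require Import Defs.
From HB Require Import structures.
From mathcomp Require Import all_boot all_order all_algebra algC zify ring.
Set Implicit Arguments. Unset Strict Implicit. Unset Printing Implicit Defensive.

Definition ecode N (r : rel 'I_N) u v : nat :=
  if r u v && r v u then 0 else if r u v then 1 else 3.

Fixpoint allbM (m : seq bool) : seq (seq bool) :=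
  match m with
  | [::] => [:: [::]]
  | b :: m' => [seq x :: s | x <- (if b then [:: true; false] else [:: false]), s <- allbM m']
  end.

Lemma allbMP m s : size s = size m ->
  (forall k, k < size m -> ~~ nth false m k -> ~~ nth false s k) -> s \in allbM m.
Proof.
elim: m s => [|b m IH] [|x s] //= [hs] hk.
have h0 := hk 0 isT.
have hs' : s \in allbM m by apply: IH => // k hk1; exact: (hk k.+1).
apply/allpairsPdep; exists x, s; split => //.
clear hk; move: h0; case: b; case: x => //=; by move=> /(_ isT).
Qed.

Definition mask N := [seq (k %/ N != k %% N) | k <- iota 0 (N * N)].
Definition relof N (l : seq bool) : nat -> nat -> bool := fun i j => (i != j) && nth false l (i * N + j).
Definition ecn (r : nat -> nat -> bool) i j : nat := if r i j && r j i then 0 else if r i j then 1 else 3.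
Definition condn N (r : nat -> nat -> bool) :=
  all (fun i => all (fun j => (i != j) ==> (r i j || r j i)) (iota 0 N)) (iota 0 N) &&
  all (fun i => all (fun j => all (fun k => [&& i != j, k != i & k != j] ==>
     ((ecn r i k + ecn r k j + ecn r j i) %% 4 == 2)) (iota 0 N)) (iota 0 N)) (iota 0 N).
Definition isoc N (r : nat -> nat -> bool) (K : nat -> nat -> bool) (p : seq nat) :=
  all (fun i => all (fun j => r (nth 0 p i) (nth 0 p j) == K i j) (iota 0 N)) (iota 0 N).
Definition bf N K := all (fun l => condn N (relof N l) ==> has (isoc N (relof N l) K) (permutations (iota 0 N))) (allbM (mask N)).

Definition K2n : nat -> nat -> bool := fun i j => (i, j) \in [:: (0,1); (1,0)].
Definition T2n : nat -> nat -> bool := fun i j => (i, j) \in [:: (0,1)].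
Definition K3n : nat -> nat -> bool := fun i j => (i, j) \in [:: (0,1); (1,0); (0,2); (2,1)].
Definition K4n : nat -> nat -> bool := fun i j => (i, j) \in
  [:: (0,1); (1,2); (2,3); (3,0); (0,2); (2,0); (1,3); (3,1)].

Definition bf2 := all (fun l => condn 2 (relof 2 l) ==>
  has (isoc 2 (relof 2 l) K2n) (permutations (iota 0 2)) ||
  has (isoc 2 (relof 2 l) T2n) (permutations (iota 0 2))) (allbM (mask 2)).

Lemma bf2_ok : bf2. Proof. vm_compute. reflexivity. Qed.
Lemma bf3_ok : bf 3 K3n. Proof. vm_compute. reflexivity. Qed.
Lemma bf4_ok : bf 4 K4n. Proof. vm_compute. reflexivity. Qed.

Section Transfer.
Variable n : nat.
Local Notation N := n.+1.
Variable D : rel 'I_N.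
Hypothesis hD : digraph_loopless D.
Hypothesis hadj : forall u v : 'I_N, u != v -> D u v || D v u.
Hypothesis htri : forall u v : 'I_N, u != v -> forall w, w != u -> w != v ->
  ((ecode D u w + ecode D w v + ecode D v u) %% 4 = 2)%N.

Definition lD := [seq (k %/ N != k %% N) && D (inord (k %/ N)) (inord (k %% N)) | k <- iota 0 (N * N)].

Lemma inord_neq i j : i < N -> j < N -> i != j -> inord i != inord j :> 'I_N.
Proof.
move=> hi hj; apply: contra => /eqP /(congr1 val) /=; rewrite !inordK // => ->.
by [].
Qed.

Lemma relofD i j : i < N -> j < N -> relof N lD i j = D (inord i) (inord j).
Proof.
move=> hi hj; rewrite /relof /lD (nth_map 0); last by rewrite size_iota; nia.
rewrite nth_iota; last by nia.
rewrite add0n divnMDl // divn_small // addn0 modnMDl modn_small //.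
case: eqP => [<-|] //=; by have := hD (inord i); case: (D _ _).
Qed.

Lemma lD_in : lD \in allbM (mask N).
Proof.
apply: allbMP; first by rewrite /lD /mask !size_map.
move=> k; rewrite /mask size_map size_iota => hk.
rewrite /lD !(nth_map 0) ?size_iota // nth_iota //.
by case: (_ != _).
Qed.

Lemma condD : condn N (relof N lD).
Proof.
apply/andP; split.
  apply/allP => i; rewrite mem_iota add0n => /andP [_ hi].
  apply/allP => j; rewrite mem_iota add0n => /andP [_ hj].
  apply/implyP => ij; rewrite !relofD //; apply: hadj; exact: inord_neq.
apply/allP => i; rewrite mem_iota add0n => /andP [_ hi].
apply/allP => j; rewrite mem_iota add0n => /andP [_ hj].
apply/allP => k; rewrite mem_iota add0n => /andP [_ hk].
apply/implyP => /and3P [ij ki kj].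
have e : forall a b, a < N -> b < N -> ecn (relof N lD) a b = ecode D (inord a) (inord b).
  by move=> a b ha hb; rewrite /ecn /ecode !relofD.
rewrite !e //; apply/eqP; apply: htri; exact: inord_neq.
Qed.

Lemma isoD K p : p \in permutations (iota 0 N) -> isoc N (relof N lD) K p ->
  digraph_iso D (fun u v : 'I_N => K u v).
Proof.
rewrite mem_permutations => hp hiso.
have up : uniq p by rewrite (perm_uniq hp) iota_uniq.
have sp : size p = N by rewrite (perm_size hp) size_iota.
have lt : forall i, i < N -> nth 0 p i < N.
  move=> i hi; have : nth 0 p i \in p by rewrite mem_nth // sp.
  by rewrite (perm_mem hp) mem_iota.
pose g := fun i : 'I_N => (inord (nth 0 p i) : 'I_N).
have ginj : injective g.
  move=> i j /(congr1 val); rewrite /g /= !inordK ?lt //.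
  move/eqP; rewrite nth_uniq ?sp // => /eqP; exact: val_inj.
exists (invF ginj); split.
  by exists g; [exact: f_invF | exact: invF_f].
move=> u v.
have -> : D u v = D (g (invF ginj u)) (g (invF ginj v)) by rewrite !f_invF.
move: (invF ginj u) (invF ginj v) => a b.
have := hiso; move=> /allP /(_ a); rewrite mem_iota add0n ltn_ord => /(_ isT).
move=> /allP /(_ b); rewrite mem_iota add0n ltn_ord => /(_ isT) /eqP <-.
by rewrite relofD ?lt.
Qed.

End Transfer.

Definition dig N (D : rel 'I_N) u v := D u v && D v u.

Section Five.
Variable n : nat.
Local Notation N := n.+1.
Variable D : rel 'I_N.
Hypothesis hadj : forall u v : 'I_N, u != v -> D u v || D v u.
Hypothesis htri : forall u v : 'I_N, u != v -> forall w, w != u -> w != v ->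
  ((ecode D u w + ecode D w v + ecode D v u) %% 4 = 2)%N.

Lemma dig1 u v w : u != v -> u != w -> v != w ->
  (dig D u v + dig D u w + dig D v w = 1)%N.
Proof.
move=> uv uw vw.
have t := htri uv (w:=w); rewrite eq_sym uw eq_sym vw in t; have {}t := t isT isT.
have a1 := hadj uv; have a2 := hadj uw; have a3 := hadj vw.
move: t a1 a2 a3; rewrite /ecode /dig.
case: (D u v); case: (D v u); case: (D u w); case: (D w u); case: (D v w); case: (D w v) => //.
Qed.

Lemma no5 : 3 < n -> False.
Proof.
move=> hn.
have d : forall i j, i < 5 -> j < 5 -> i != j -> (inord i : 'I_N) != inord j.
  by move=> i j hi hj; apply: inord_neq; lia.
have h := fun i j k hi hj hk hij hik hjk =>
  dig1 (d i j hi hj hij) (d i k hi hk hik) (d j k hj hk hjk).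
have e012 := h 0 1 2 isT isT isT isT isT isT.
have e013 := h 0 1 3 isT isT isT isT isT isT.
have e014 := h 0 1 4 isT isT isT isT isT isT.
have e023 := h 0 2 3 isT isT isT isT isT isT.
have e024 := h 0 2 4 isT isT isT isT isT isT.
have e034 := h 0 3 4 isT isT isT isT isT isT.
have e123 := h 1 2 3 isT isT isT isT isT isT.
have e124 := h 1 2 4 isT isT isT isT isT isT.
have e134 := h 1 3 4 isT isT isT isT isT isT.
have e234 := h 2 3 4 isT isT isT isT isT isT.
move: e012 e013 e014 e023 e024 e034 e123 e124 e134 e234.
case: (dig D (inord 0) (inord 1)); case: (dig D (inord 0) (inord 2)); case: (dig D (inord 0) (inord 3)); case: (dig D (inord 0) (inord 4)); case: (dig D (inord 1) (inord 2)); case: (dig D (inord 1) (inord 3)); case: (dig D (inord 1) (inord 4)); case: (dig D (inord 2) (inord 3)); case: (dig D (inord 2) (inord 4)); case: (dig D (inord 3) (inord 4)) => //.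
Qed.
End Five.

Import Order.TTheory GRing.Theory Num.Theory.
Local Open Scope ring_scope.

Section Alg.
Variable N : nat.
Implicit Types X Y : 'M[algC]_N.

Definition herm X := forall i j, X j i = (X i j)^*.

Lemma herm_mul X Y : herm X -> herm Y -> X *m Y = Y *m X -> herm (X *m Y).
Proof.
move=> hX hY c i j; rewrite {1}c !mxE rmorph_sum; apply: eq_bigr => k _.
by rewrite (hY k j) (hX i k) rmorphM mulrC.
Qed.

Lemma herm_nil X : herm X -> X *m X = 0 -> X = 0.
Proof.
move=> hX h0; apply/matrixP => i j.
have : (X *m X) i i = 0 by rewrite h0 mxE.
rewrite mxE => hs.
have hs' : \sum_k `|X i k| ^+ 2 = 0.
  rewrite -[RHS]hs; apply: eq_bigr => k _; by rewrite normCK (hX i k).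
have := psumr_eq0P (fun k _ => exprn_ge0 2 (normr_ge0 (X i k))) hs'.
move=> /(_ j isT).
by move/eqP; rewrite expf_eq0 /= normr_eq0 mxE => /eqP.
Qed.


Lemma herm1 : herm (1%:M : 'M[algC]_N).
Proof. by move=> i j; rewrite !mxE eq_sym rmorph_nat. Qed.

End Alg.

Section Alg2.
Variable n : nat.
Implicit Types X Y : 'M[algC]_n.+1.

Lemma herm_exp X k : herm X -> herm (X ^+ k).
Proof.
move=> hX; elim: k => [|k IH]; first by rewrite expr0; exact: herm1.
rewrite exprS -mulmxE; apply: herm_mul => //.
by rewrite mulmxE; apply: commrX.
Qed.

Lemma herm_pow_nil X k : herm X -> X ^+ k.+1 = 0 -> X = 0.
Proof.
elim: k X => [|k IH] X hX; first by rewrite expr1.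
move=> h0; apply: IH => //; apply: (@herm_nil _ (X ^+ k.+1)); first exact: herm_exp.
rewrite mulmxE -exprD; have -> : (k.+1 + k.+1 = k.+2 + k)%N by lia.
by rewrite exprD h0 mul0r.
Qed.
End Alg2.

Section Graph.
Variable n : nat.
Variable D : rel 'I_n.+1.
Local Notation H := (hermAdj D).

Lemma herm_add N (X Y : 'M[algC]_N) : herm X -> herm Y -> herm (X + Y).
Proof. by move=> hX hY i j; rewrite !mxE hX hY rmorphD. Qed.
Lemma herm_opp N (X : 'M[algC]_N) : herm X -> herm (- X).
Proof. by move=> hX i j; rewrite !mxE hX rmorphN. Qed.
Lemma herm_scal N k : herm (k%:R%:M : 'M[algC]_N).
Proof. by move=> i j; rewrite !mxE eq_sym rmorphMn rmorph_nat. Qed.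

Lemma hermH : herm H.
Proof.
move=> i j; rewrite !mxE.
case: (D i j); case: (D j i) => /=; rewrite ?rmorph1 ?rmorph0 ?rmorphN //= ?(conjCi algC) ?opprK //.
Qed.

Lemma HH u w : H u w * H w u = (D u w || D w u)%:R.
Proof.
rewrite !mxE.
case: (D u w); case: (D w u) => /=; rewrite ?mulr1 ?mul0r ?mulr0 //.
  by rewrite mulrN -expr2 sqrCi opprK.
by rewrite mulNr -expr2 sqrCi opprK.
Qed.

Lemma Hdiag u : digraph_loopless D -> H u u = 0.
Proof. by move=> hD; rewrite !mxE; have := hD u; case: (D u u). Qed.

Lemma CH : H_spectrum_is_main D ->
  (H + n%:R%:M) * (H - 1) ^+ n = 0.
Proof.
move=> hs; have := Cayley_Hamilton H; rewrite hs.
rewrite (rmorphM (horner_mx H)) (rmorphXn (horner_mx H)) (rmorphD (horner_mx H)) (rmorphB (horner_mx H)) (rmorph1 (horner_mx H)).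
move=> <-; congr (_ * (_ - _) ^+ _); first congr (_ + _). all: by [exact: (esym (horner_mx_X H)) | exact: (esym (horner_mx_C H _))].
Qed.

Lemma Q0 : (0 < n)%N -> H_spectrum_is_main D -> (H + n%:R%:M) * (H - 1) = 0.
Proof.
move=> hn hs; have hc := CH hs.
have cHC : GRing.comm H (n%:R%:M) by rewrite /GRing.comm -!mulmxE scalar_mxC.
have cAB : GRing.comm (H + n%:R%:M) (H - 1).
  apply: commrB; last exact: commr1.
  apply: commr_sym; apply: commrD; [exact: commr_refl | exact: cHC].
apply: (@herm_pow_nil _ _ n.-1).
  rewrite -mulmxE; apply: herm_mul; first by apply: herm_add; [exact: hermH | exact: herm_scal].
    by apply: herm_add; [exact: hermH | apply: herm_opp; exact: herm1].
  by rewrite mulmxE cAB.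
rewrite prednK // exprMn_comm //.
have e : (H + n%:R%:M) ^+ n = (H + n%:R%:M) ^+ n.-1 * (H + n%:R%:M) by rewrite -exprSr prednK.
by rewrite e -mulrA hc mulr0.
Qed.

Lemma Qentry u v : (0 < n)%N -> H_spectrum_is_main D ->
  \sum_w H u w * H w v + (n%:R - 1) * H u v = n%:R *+ (u == v).
Proof.
move=> hn hs; have := Q0 hn hs; move/matrixP/(_ u v).
rewrite mulrDl !mulrBr !mulr1 -!mulmxE mul_scalar_mx !mxE /=.
move=> h; apply/eqP; rewrite -subr_eq0; apply/eqP; rewrite -[RHS]h.
ring.
Qed.
End Graph.

Lemma count_all N (f : 'I_N.+1 -> bool) u : f u = false ->
  (\sum_w (f w : nat))%N = N -> forall w, w != u -> f w.
Proof.
move=> fu hs w wu.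
have h1 : (\sum_(w | w != u) (f w : nat))%N = N.
  by rewrite -[X in _ = X]hs [RHS](bigD1 u) //= fu.
have h2 : (\sum_(w | w != u) 1)%N = N by rewrite sum1_card cardC1 card_ord.
have h3 : (\sum_(w | w != u) ((1 - f w) + f w))%N = N.
  by rewrite -[X in _ = X]h2; apply: eq_bigr => x _; case: (f x).
rewrite big_split /= h1 in h3.
set S := (\sum_(i < N.+1 | i != u) (1 - f i))%N in h3. have h4 : S = 0%N by lia. rewrite /S in h4.
move/eqP: h4; rewrite sum_nat_eq0 => /forallP/(_ w); rewrite wu /=.
by case: (f w).
Qed.

Section Graph2.
Variable n : nat.
Variable D : rel 'I_n.+1.
Local Notation H := (hermAdj D).
Hypothesis hn : (0 < n)%N.
Hypothesis hs : H_spectrum_is_main D.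
Hypothesis hD : digraph_loopless D.

Lemma adjH u w : u != w -> D u w || D w u.
Proof.
move=> uw; have := Qentry u u hn hs.
rewrite Hdiag // mulr0 addr0 eqxx mulr1n.
under eq_bigr do rewrite HH.
rewrite -natr_sum => /eqP; rewrite eqr_nat => /eqP h.
have fu : (D u u || D u u) = false by have := hD u; case: (D u u).
by apply: (count_all fu h); rewrite eq_sym.
Qed.
End Graph2.


Lemma i3 : ('i : algC) ^+ 3 = - 'i.
Proof. by rewrite exprS sqrCi mulrN1. Qed.

Lemma i4 : ('i : algC) ^+ 4 = 1.
Proof. by rewrite (exprM _ 2 2) sqrCi sqrrN expr1n. Qed.

Lemma ipow_mod k : ('i : algC) ^+ k = 'i ^+ (k %% 4).
Proof. by rewrite {1}(divn_eq k 4) mulnC exprD exprM i4 expr1n mul1r. Qed.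

Definition gk k : nat := nth 0%N [:: 4; 2; 0; 2]%N (k %% 4).

Lemma gk_eq k : ('i ^+ k + 1) + ('i ^+ k + 1)^* = (gk k)%:R :> algC.
Proof.
rewrite ipow_mod /gk; have : (k %% 4 < 4)%N by rewrite ltn_mod.
move: (k %% 4)%N => m; case: m => [|[|[|[|m]]]] //= _.
- rewrite expr0 rmorphD rmorph1; ring.
- rewrite expr1 rmorphD rmorph1 /= (conjCi algC); ring.
- rewrite sqrCi rmorphD rmorph1 rmorphN rmorph1; ring.
- rewrite i3 rmorphD rmorph1 rmorphN /= (conjCi algC); ring.
Qed.

Section Graph3.
Variable n : nat.
Variable D : rel 'I_n.+1.
Local Notation H := (hermAdj D).
Hypothesis hn : (0 < n)%N.
Hypothesis hs : H_spectrum_is_main D.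
Hypothesis hD : digraph_loopless D.

Lemma Hpow u v : u != v -> H u v = 'i ^+ ecode D u v.
Proof.
move=> uv; have := adjH hn hs hD uv; rewrite !mxE /ecode.
case: (D u v); case: (D v u) => //= _; by rewrite ?expr0 ?expr1 ?i3.
Qed.

Lemma triple u v : u != v -> forall w, w != u -> w != v ->
  ((ecode D u w + ecode D w v + ecode D v u) %% 4 = 2)%N.
Proof.
move=> uv.
pose P := fun w => (w != v) && (w != u).
pose y := fun w => H u w * H w v * H v u.
have h0 := Qentry u v hn hs; rewrite (negbTE uv) mulr0n in h0.
have huv : H u v * H v u = 1 by rewrite HH adjH.
have h1 : \sum_w y w = 1 - n%:R.
  rewrite /y -mulr_suml; apply/eqP; rewrite -subr_eq0; apply/eqP.
  have : (\sum_w H u w * H w v + (n%:R - 1) * H u v) * H v u = 0 by rewrite h0 mul0r.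
  rewrite mulrDl -mulrA huv mulr1 => e; rewrite -[RHS]e; ring.
have h2 : \sum_(w | P w) y w = 1 - n%:R.
  rewrite -h1 [RHS](bigID P) /= [X in _ = _ + X]big1 ?addr0 // => w.
  rewrite /P negb_and !negbK /y => /orP [] /eqP ->; by rewrite Hdiag // ?mulr0 ?mul0r.
have hcard : #|P| = n.-1.
  have e := cardD1 v (predC1 u); rewrite cardC1 card_ord inE eq_sym uv /= in e.
  set c := #|_| in e; have -> : n.-1 = c by lia. rewrite /c.
  by apply: eq_card => w; rewrite !inE.
have h3 : \sum_(w | P w) (y w + 1) = 0.
  rewrite big_split /= h2 sumr_const hcard -[in n%:R](prednK hn) -addn1 natrD; ring.
have hy : forall w, P w -> y w = 'i ^+ (ecode D u w + ecode D w v + ecode D v u).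
  move=> x /andP [xv xu]; rewrite /y !Hpow // 1?eq_sym // -!exprD; reflexivity.
have h4 : \sum_(w | P w) ((gk (ecode D u w + ecode D w v + ecode D v u))%:R : algC) = 0.
  have h5 : \sum_(w | P w) ((y w + 1) + (y w + 1)^*) = 0.
    by rewrite big_split /= h3 -rmorph_sum h3 rmorph0 addr0.
  rewrite -[RHS]h5; apply: eq_bigr => z Pz; by rewrite -gk_eq hy.
move: h4; rewrite -natr_sum => /eqP; rewrite -(mulr0n (1 : algC)) eqr_nat sum_nat_eq0.
move=> /forallP hall w wu wv; have := hall w; rewrite /P wu wv /= /gk.
move: (_ + _ + _)%N => k; have : (k %% 4 < 4)%N by rewrite ltn_mod.
by move: (k %% 4)%N => m; case: m => [|[|[|[|m]]]].
Qed.
End Graph3.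


Local Close Scope ring_scope.


Lemma use_bf n (D : rel 'I_n.+1) (hn : 0 < n) (hs : H_spectrum_is_main D)
  (hD : digraph_loopless D) : condn n.+1 (relof n.+1 (lD D)).
Proof. by apply: condD => //; [exact: adjH | exact: triple]. Qed.

Theorem proposition5p2 (n : nat) (D : rel 'I_n.+1)
  (hD : digraph_loopless D) (hspec : H_spectrum_is_main D) :
  digraph_iso D K1 \/ digraph_iso D K2 \/ digraph_iso D T2 \/
  digraph_iso D K3' \/ digraph_iso D K4'.
Proof.
case: n D hD hspec => [|[|[|[|n]]]] D hD hs.
- left; exists id; split; first by exists id.
  move=> u v; have -> : u = v by apply/val_inj; rewrite /= !ord1.
  by have := hD v; case: (D v v).
- have := allP bf2_ok _ (lD_in D); rewrite use_bf // implyTb => /orP [] /seq.hasP [p hp hi].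
  + by right; left; exact: (isoD hD hp hi).
  + by right; right; left; exact: (isoD hD hp hi).
- have := allP bf3_ok _ (lD_in D); rewrite use_bf // implyTb => /seq.hasP [p hp hi].
  by right; right; right; left; exact: (isoD hD hp hi).
- have := allP bf4_ok _ (lD_in D); rewrite use_bf // implyTb => /seq.hasP [p hp hi].
  by right; right; right; right; exact: (isoD hD hp hi).
- exfalso; apply: (@no5 n.+4 D); [exact: adjH | exact: triple | by []].
Qed.
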